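(* Let $\Gamma\subset\{d_L<+\infty\}$ be a $\sigma$-compact $d_L$-cyclically monotone subset of $X\times X$, and let $\Gamma'$, $G$, $R$ be defined from $\Gamma$ as in the context. Then: (1) $G$ is $d_L$-cyclically monotone; (2) $\Gamma'\subset G\subset\{(x,y):d_L(x,y)<+\infty\}$; (3) $G$ and $R$ are analytic subsets of $X\times X$.
   Context: $(X,d)$ is a Polish space and $d_L:X\times X\to[0,+\infty]$ is a distance (possibly taking the value $+\infty$) which is Borel on $(X\times X,d\times d)$. A set $\Gamma\subset X\times X$ is $d_L$-cyclically monotone if for all $(x_0,y_0),\dots,(x_n,y_n)\in\Gamma$, $\sum_{i=0}^n d_L(x_i,y_i)\le\sum_{i=0}^n d_L(x_{i+1},y_i)$ with $x_{n+1}=x_0$. $\Gamma'$ is the set of $(x,y)$ such that there exist $I\ge0$ and $(w_i,z_i)\in\Gamma$, $i=0,\dots,I$, with $w_0=x$, $z_I=y$, $w_{I+1}:=w_0$ and $\sum_{i=0}^I(d_L(w_{i+1},z_i)-d_L(w_i,z_i))=0$. The set of oriented transport rays is $G:=\{(x,y):\exists(w,z)\in\Gamma',\ d_L(w,x)+d_L(x,y)+d_L(y,z)=d_L(w,z)\}$, $G^{-1}:=\{(x,y):(y,x)\in G\}$, and $R:=G\cup G^{-1}$. Analytic sets are projections of Borel sets of products of Polish spaces. *)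

(* Defs.v *)
From Stdlib Require Import Reals Lra.
Open Scope R_scope.

Inductive ER : Type := Fin (r : R) | PInf.

Definition eadd (a b : ER) : ER :=
  match a, b with
  | Fin x, Fin y => Fin (x + y)
  | _, _ => PInf
  end.

Definition ele (a b : ER) : Prop :=
  match a, b with
  | Fin x, Fin y => x <= y
  | _, PInf => True
  | PInf, Fin _ => False
  end.

Fixpoint esum (n : nat) (g : nat -> ER) : ER :=
  match n with
  | O => g O
  | S m => eadd (esum m g) (g (S m))
  end.

Definition is_metric {X : Type} (d : X -> X -> R) : Prop :=
  (forall x y, 0 <= d x y) /\
  (forall x y, d x y = 0 <-> x = y) /\
  (forall x y, d x y = d y x) /\
  (forall x y z, d x z <= d x y + d y z).

Definition cauchy {X : Type} (d : X -> X -> R) (u : nat -> X) : Prop :=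
  forall eps, 0 < eps -> exists N, forall n m, (N <= n)%nat -> (N <= m)%nat ->
    d (u n) (u m) < eps.

Definition converges_to {X : Type} (d : X -> X -> R) (u : nat -> X) (l : X) : Prop :=
  forall eps, 0 < eps -> exists N, forall n, (N <= n)%nat -> d (u n) l < eps.

Definition complete {X : Type} (d : X -> X -> R) : Prop :=
  forall u, cauchy d u -> exists l, converges_to d u l.

(** countable dense subset (enumerated by nat, with [None] allowing X empty) *)
Definition separable {X : Type} (d : X -> X -> R) : Prop :=
  exists e : nat -> option X, forall x eps, 0 < eps ->
    exists n y, e n = Some y /\ d x y < eps.

Definition polish {X : Type} (d : X -> X -> R) : Prop :=
  is_metric d /\ complete d /\ separable d.

Definition prod_metric {X Y : Type} (dX : X -> X -> R) (dY : Y -> Y -> R)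
  (p q : X * Y) : R := Rmax (dX (fst p) (fst q)) (dY (snd p) (snd q)).

Definition is_open {X : Type} (d : X -> X -> R) (U : X -> Prop) : Prop :=
  forall x, U x -> exists eps, 0 < eps /\ forall y, d x y < eps -> U y.

Definition compact {X : Type} (d : X -> X -> R) (K : X -> Prop) : Prop :=
  forall (I : Type) (U : I -> X -> Prop),
    (forall i, is_open d (U i)) ->
    (forall x, K x -> exists i, U i x) ->
    exists l : list I, forall x, K x -> exists i, List.In i l /\ U i x.

Definition sigma_compact {X : Type} (d : X -> X -> R) (A : X -> Prop) : Prop :=
  exists K : nat -> X -> Prop,
    (forall n, compact d (K n)) /\ (forall x, A x <-> exists n, K n x).

Definition sigma_algebra {X : Type} (S : (X -> Prop) -> Prop) : Prop :=
  S (fun _ => False) /\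
  (forall A, S A -> S (fun x => ~ A x)) /\
  (forall A : nat -> X -> Prop, (forall n, S (A n)) -> S (fun x => exists n, A n x)).

Definition borel {X : Type} (d : X -> X -> R) (A : X -> Prop) : Prop :=
  forall S : (X -> Prop) -> Prop, sigma_algebra S ->
    (forall U, is_open d U -> S U) -> S A.

Definition borel_fun {X : Type} (d : X -> X -> R) (f : X -> ER) : Prop :=
  forall r : R, borel d (fun x => ele (f x) (Fin r)).

Definition analytic {Y : Type} (dY : Y -> Y -> R) (A : Y -> Prop) : Prop :=
  exists (Z : Type) (dZ : Z -> Z -> R), polish dZ /\
    exists B : Y * Z -> Prop, borel (prod_metric dY dZ) B /\
      forall y, A y <-> exists z, B (y, z).

Definition ext_distance {X : Type} (dL : X -> X -> ER) : Prop :=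
  (forall x y r, dL x y = Fin r -> 0 <= r) /\
  (forall x y, dL x y = Fin 0 <-> x = y) /\
  (forall x y, dL x y = dL y x) /\
  (forall x y z, ele (dL x z) (eadd (dL x y) (dL y z))).

Definition cnext (n i : nat) : nat := if Nat.eqb i n then O else S i.

Definition cyc_mono {X : Type} (dL : X -> X -> ER) (Gam : X * X -> Prop) : Prop :=
  forall (n : nat) (x y : nat -> X),
    (forall i, (i <= n)%nat -> Gam (x i, y i)) ->
    ele (esum n (fun i => dL (x i) (y i)))
        (esum n (fun i => dL (x (cnext n i)) (y i))).

Definition Gamma' {X : Type} (dL : X -> X -> ER) (Gam : X * X -> Prop)
  (p : X * X) : Prop :=
  exists (I : nat) (w z : nat -> X),
    (forall i, (i <= I)%nat -> Gam (w i, z i)) /\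
    w O = fst p /\ z I = snd p /\
    esum I (fun i => dL (w (cnext I i)) (z i)) = esum I (fun i => dL (w i) (z i)).

Definition Grays {X : Type} (dL : X -> X -> ER) (Gam : X * X -> Prop)
  (p : X * X) : Prop :=
  exists w z, Gamma' dL Gam (w, z) /\
    eadd (eadd (dL w (fst p)) (dL (fst p) (snd p))) (dL (snd p) z) = dL w z.

Definition Ginv {X : Type} (dL : X -> X -> ER) (Gam : X * X -> Prop)
  (p : X * X) : Prop := Grays dL Gam (snd p, fst p).

Definition Rrays {X : Type} (dL : X -> X -> ER) (Gam : X * X -> Prop)
  (p : X * X) : Prop := Grays dL Gam p \/ Ginv dL Gam p.

(* Main.v *)
Require Import Defs.
From Stdlib Require Import Reals Lra Lia List Classical FunctionalExtensionality PropExtensionality Cantor.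
Import ListNotations.
Open Scope R_scope.

Definition contf {A B : Type} (dA : A -> A -> R) (dB : B -> B -> R) (f : A -> B) : Prop :=
  forall a eps, 0 < eps -> exists del, 0 < del /\ forall a', dA a a' < del -> dB (f a) (f a') < eps.

Lemma ext_set {A : Type} (P Q : A -> Prop) : (forall x, P x <-> Q x) -> P = Q.
Proof. intros H. apply functional_extensionality; intros x; apply propositional_extensionality; auto. Qed.

Section BorelS.
Context {A : Type} (dA : A -> A -> R).

Lemma borel_open U : is_open dA U -> borel dA U.
Proof. intros HU S HS Ho; auto. Qed.

Lemma borel_compl U : borel dA U -> borel dA (fun x => ~ U x).
Proof. intros H S HS Ho. apply (proj1 (proj2 HS)). apply H; auto. Qed.

Lemma borel_cunion (U : nat -> A -> Prop) : (forall n, borel dA (U n)) -> borel dA (fun x => exists n, U n x).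
Proof. intros H S HS Ho. apply (proj2 (proj2 HS)). intros n. apply H; auto. Qed.

Lemma borel_ext U V : (forall x, U x <-> V x) -> borel dA U -> borel dA V.
Proof. intros H. rewrite (ext_set U V H). auto. Qed.

Lemma borel_empty : borel dA (fun _ => False).
Proof. intros S HS Ho. apply HS. Qed.

Lemma borel_full : borel dA (fun _ => True).
Proof. apply (borel_ext (fun x => ~ False)). tauto. apply borel_compl, borel_empty. Qed.

Lemma borel_cinter (U : nat -> A -> Prop) : (forall n, borel dA (U n)) -> borel dA (fun x => forall n, U n x).
Proof.
  intros H. apply (borel_ext (fun x => ~ exists n, ~ U n x)).
  - intros x. split.
    + intros H1 n. apply NNPP. intro H2. apply H1. eauto.
    + intros H1 [n Hn]. auto.
  - apply borel_compl, borel_cunion. intros n. apply borel_compl, H.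
Qed.

Lemma borel_union2 U V : borel dA U -> borel dA V -> borel dA (fun x => U x \/ V x).
Proof.
  intros HU HV. apply (borel_ext (fun x => exists n, (match n with O => U | S _ => V end) x)).
  - intros x. split.
    + intros [[|n] Hn]; auto.
    + intros [H|H]; [exists O|exists (S O)]; auto.
  - apply borel_cunion. intros [|n]; auto.
Qed.

Lemma borel_inter2 U V : borel dA U -> borel dA V -> borel dA (fun x => U x /\ V x).
Proof.
  intros HU HV. apply (borel_ext (fun x => ~ (~ U x \/ ~ V x))).
  - intros x. tauto.
  - apply borel_compl, borel_union2; apply borel_compl; auto.
Qed.

Lemma borel_impl (Q : Prop) U : (Q -> borel dA U) -> borel dA (fun x => Q -> U x).
Proof.
  intros H. destruct (classic Q) as [q|nq].
  - apply (borel_ext U); [|auto]. intros x; tauto.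
  - apply (borel_ext (fun _ => True)); [|apply borel_full]. intros x; tauto.
Qed.

Lemma borel_closed C : is_open dA (fun x => ~ C x) -> borel dA C.
Proof.
  intros H. apply (borel_ext (fun x => ~ ~ C x)). intros x; tauto.
  apply borel_compl, borel_open, H.
Qed.

End BorelS.

Lemma borel_preimage {A B : Type} (dA : A -> A -> R) (dB : B -> B -> R) (f : A -> B) U :
  contf dA dB f -> borel dB U -> borel dA (fun a => U (f a)).
Proof.
  intros Hf HU. apply (HU (fun V => borel dA (fun a => V (f a)))).
  - split; [|split].
    + apply borel_empty.
    + intros V HV. apply (borel_compl _ _ HV).
    + intros V HV. apply (borel_cunion _ _ HV).
  - intros V HV. apply borel_open. intros a Ha. destruct (HV (f a) Ha) as [eps [He Hb]].
    destruct (Hf a eps He) as [del [Hd Hc]]. exists del; split; auto.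
Qed.

Definition dR (x y : R) : R := Rabs (x - y).

Lemma contf_comp {A B C : Type} dA dB dC (f : A -> B) (g : B -> C) :
  contf dA dB f -> contf dB dC g -> contf dA dC (fun a => g (f a)).
Proof.
  intros Hf Hg a eps He. destruct (Hg (f a) eps He) as [d1 [H1 H1']].
  destruct (Hf a d1 H1) as [d2 [H2 H2']]. exists d2; split; auto.
Qed.

Lemma contf_const {A B : Type} dA (dB : B -> B -> R) (b : B) :
  dB b b = 0 -> contf (A:=A) dA dB (fun _ => b).
Proof. intros H a eps He. exists 1; split; [lra|]. intros; rewrite H; auto. Qed.

Lemma contf_fst {A B : Type} (dA : A -> A -> R) (dB : B -> B -> R) : contf (prod_metric dA dB) dA fst.
Proof.
  intros a eps He. exists eps; split; auto. intros a' H. unfold prod_metric in H.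
  eapply Rle_lt_trans; [apply Rmax_l|exact H].
Qed.

Lemma contf_snd {A B : Type} (dA : A -> A -> R) (dB : B -> B -> R) : contf (prod_metric dA dB) dB snd.
Proof.
  intros a eps He. exists eps; split; auto. intros a' H. unfold prod_metric in H.
  eapply Rle_lt_trans; [apply Rmax_r|exact H].
Qed.

Lemma contf_pair {A B C : Type} (dA : A -> A -> R) (dB : B -> B -> R) (dC : C -> C -> R) f g :
  contf dC dA f -> contf dC dB g -> contf dC (prod_metric dA dB) (fun c => (f c, g c)).
Proof.
  intros Hf Hg c eps He. destruct (Hf c eps He) as [d1 [H1 H1']]. destruct (Hg c eps He) as [d2 [H2 H2']].
  exists (Rmin d1 d2). split; [apply Rmin_glb_lt; auto|]. intros c' Hc. unfold prod_metric; simpl.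
  apply Rmax_lub_lt; [apply H1'|apply H2']; eapply Rlt_le_trans; eauto; [apply Rmin_l|apply Rmin_r].
Qed.

Lemma contf_plus {A : Type} (dA : A -> A -> R) F G :
  contf dA dR F -> contf dA dR G -> contf dA dR (fun a => F a + G a).
Proof.
  intros Hf Hg a eps He. destruct (Hf a (eps/2) ltac:(lra)) as [d1 [H1 H1']].
  destruct (Hg a (eps/2) ltac:(lra)) as [d2 [H2 H2']].
  exists (Rmin d1 d2). split; [apply Rmin_glb_lt; auto|]. intros c' Hc.
  assert (A1 : dR (F a) (F c') < eps/2) by (apply H1'; eapply Rlt_le_trans; eauto; apply Rmin_l).
  assert (A2 : dR (G a) (G c') < eps/2) by (apply H2'; eapply Rlt_le_trans; eauto; apply Rmin_r).
  unfold dR in *.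
  replace (F a + G a - (F c' + G c')) with ((F a - F c') + (G a - G c')) by ring.
  pose proof (Rabs_triang (F a - F c') (G a - G c')). lra.
Qed.

Lemma contf_opp {A : Type} (dA : A -> A -> R) F : contf dA dR F -> contf dA dR (fun a => - F a).
Proof.
  intros Hf a eps He. destruct (Hf a eps He) as [d1 [H1 H1']]. exists d1; split; auto.
  intros a' H. unfold dR in *. replace (- F a - - F a') with (- (F a - F a')) by ring.
  rewrite Rabs_Ropp. auto.
Qed.

Lemma contf_sum {A : Type} (dA : A -> A -> R) (F : nat -> A -> R) n :
  (forall i, contf dA dR (F i)) -> contf dA dR (fun a => sum_f_R0 (fun i => F i a) n).
Proof.
  intros H. induction n; simpl; auto. apply contf_plus; auto.
Qed.

Lemma borel_eqR {A : Type} (dA : A -> A -> R) F G :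
  contf dA dR F -> contf dA dR G -> borel dA (fun a => F a = G a).
Proof.
  intros HF HG. apply borel_closed. intros a Ha.
  pose proof (contf_plus dA F (fun a => - G a) HF (contf_opp dA G HG)) as H.
  assert (Hp : 0 < Rabs (F a - G a)) by (apply Rabs_pos_lt; intro; apply Ha; lra).
  destruct (H a _ Hp) as [del [Hd Hd']]. exists del; split; auto.
  intros a' Ha' E. specialize (Hd' a' Ha'). unfold dR in Hd'. rewrite E in Hd'.
  replace (F a + - G a - (G a' + - G a')) with (F a - G a) in Hd' by ring. lra.
Qed.

Lemma borel_leR {A : Type} (dA : A -> A -> R) F G :
  contf dA dR F -> contf dA dR G -> borel dA (fun a => F a <= G a).
Proof.
  intros HF HG. apply borel_closed. intros a Ha. apply Rnot_le_lt in Ha.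
  pose proof (contf_plus dA F (fun a => - G a) HF (contf_opp dA G HG)) as H.
  destruct (H a (F a - G a) ltac:(lra)) as [del [Hd Hd']]. exists del; split; auto.
  intros a' Ha' E. specialize (Hd' a' Ha'). unfold dR in Hd'.
  apply Rabs_def2 in Hd'. lra.
Qed.

Lemma metric_R : is_metric dR.
Proof.
  unfold dR. split; [|split; [|split]].
  - intros; apply Rabs_pos.
  - intros x y. split; intros H.
    + destruct (Req_dec x y) as [|n]; auto. exfalso.
      assert (0 < Rabs (x - y)) by (apply Rabs_pos_lt; lra). lra.
    + subst. replace (y - y) with 0 by ring. apply Rabs_R0.
  - intros; apply Rabs_minus_sym.
  - intros x y z. replace (x - z) with ((x - y) + (y - z)) by ring. apply Rabs_triang.
Qed.

Lemma small_inv eps : 0 < eps -> exists b : nat, / INR (S b) < eps.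
Proof.
  intros He. destruct (archimed_cor1 eps He) as [N [H1 H2]]. exists (pred N).
  replace (S (pred N)) with N by lia. exact H1.
Qed.

Lemma polish_R : polish dR.
Proof.
  split; [apply metric_R|split].
  - intros u Hu. destruct (R_complete u Hu) as [l Hl]. exists l. exact Hl.
  - exists (fun n => let (a, b) := Cantor.of_nat n in let (k1, k2) := Cantor.of_nat a in
                Some (IZR (Z.of_nat k1 - Z.of_nat k2) / INR (S b))).
    intros x eps He. destruct (small_inv eps He) as [b Hb].
    set (N := INR (S b)). assert (HN : 0 < N) by (apply lt_0_INR; lia).
    set (k := up (x * N)). destruct (archimed (x * N)) as [A1 A2]. fold k in A1, A2.
    exists (Cantor.to_nat (Cantor.to_nat (Z.to_nat k, Z.to_nat (- k)), b)).
    exists (IZR k / N). rewrite !Cantor.cancel_of_to. split.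
    + f_equal. f_equal. f_equal. lia.
    + unfold dR. set (q := IZR k) in *.
      assert (E : x - q / N = - ((q - x * N) * / N)) by (field; lra).
      rewrite E, Rabs_Ropp, Rabs_right.
      * assert (0 < / N) by (apply Rinv_0_lt_compat; lra).
        apply Rle_lt_trans with (1 * / N); [apply Rmult_le_compat_r; lra|]. fold N in Hb. lra.
      * assert (0 < / N) by (apply Rinv_0_lt_compat; lra).
        apply Rle_ge. apply Rmult_le_pos; lra.
Qed.

Lemma metric_prod {A B : Type} (dA : A -> A -> R) (dB : B -> B -> R) :
  is_metric dA -> is_metric dB -> is_metric (prod_metric dA dB).
Proof.
  intros (A1 & A2 & A3 & A4) (B1 & B2 & B3 & B4). unfold prod_metric.
  split; [|split; [|split]].
  - intros x y. eapply Rle_trans; [apply A1|apply Rmax_l].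
  - intros [a b] [a' b']; simpl. split; intros H.
    + assert (H1 : dA a a' <= 0) by (rewrite <- H; apply Rmax_l).
      assert (H2 : dB b b' <= 0) by (rewrite <- H; apply Rmax_r).
      pose proof (A1 a a'). pose proof (B1 b b').
      assert (a = a') by (apply A2; lra). assert (b = b') by (apply B2; lra). subst; auto.
    + injection H as -> ->. rewrite (proj2 (A2 a' a') eq_refl), (proj2 (B2 b' b') eq_refl).
      unfold Rmax; destruct Rle_dec; lra.
  - intros x y. rewrite A3, B3. reflexivity.
  - intros x y z. apply Rmax_lub.
    + eapply Rle_trans; [apply A4 with (y := fst y)|]. apply Rplus_le_compat; apply Rmax_l.
    + eapply Rle_trans; [apply B4 with (y := snd y)|]. apply Rplus_le_compat; apply Rmax_r.
Qed.

Lemma polish_prod {A B : Type} (dA : A -> A -> R) (dB : B -> B -> R) :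
  polish dA -> polish dB -> polish (prod_metric dA dB).
Proof.
  intros (MA & CA & [eA HA]) (MB & CB & [eB HB]). split; [apply metric_prod; auto|split].
  - intros u Hu.
    destruct (CA (fun n => fst (u n))) as [la Hla].
    { intros eps He. destruct (Hu eps He) as [N HN]. exists N. intros n m Hn Hm.
      eapply Rle_lt_trans; [apply Rmax_l|apply (HN n m Hn Hm)]. }
    destruct (CB (fun n => snd (u n))) as [lb Hlb].
    { intros eps He. destruct (Hu eps He) as [N HN]. exists N. intros n m Hn Hm.
      eapply Rle_lt_trans; [apply Rmax_r|apply (HN n m Hn Hm)]. }
    exists (la, lb). intros eps He. destruct (Hla eps He) as [N1 H1]. destruct (Hlb eps He) as [N2 H2].
    exists (max N1 N2). intros n Hn. unfold prod_metric; simpl.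
    apply Rmax_lub_lt; [apply H1|apply H2]; lia.
  - exists (fun n => let (a, b) := Cantor.of_nat n in
               match eA a, eB b with Some x, Some y => Some (x, y) | _, _ => None end).
    intros [x y] eps He. destruct (HA x eps He) as (a & x' & Ea & Hx). destruct (HB y eps He) as (b & y' & Eb & Hy).
    exists (Cantor.to_nat (a, b)), (x', y'). rewrite Cantor.cancel_of_to, Ea, Eb. split; [reflexivity|].
    unfold prod_metric; simpl. apply Rmax_lub_lt; auto.
Qed.

Fixpoint ldist {T : Type} (dT : T -> T -> R) (l l' : list T) : R :=
  match l, l' with
  | [], [] => 0
  | a :: l, b :: l' => Rmax (Rmin 1 (dT a b)) (ldist dT l l')
  | _, _ => 2
  end.

Section Lists.
Context {T : Type} (dT : T -> T -> R) (MT : is_metric dT).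

Lemma dT_pos a b : 0 <= dT a b.
Proof. apply MT. Qed.
Lemma dT_self a : dT a a = 0.
Proof. apply MT. reflexivity. Qed.

Lemma ldist_bound l l' : 0 <= ldist dT l l' <= 2.
Proof.
  revert l'; induction l as [|a l IH]; intros [|b l']; simpl; try lra.
  specialize (IH l'). pose proof (dT_pos a b). unfold Rmin, Rmax; repeat destruct Rle_dec; lra.
Qed.

Lemma ldist_self l : ldist dT l l = 0.
Proof. induction l; simpl; auto. rewrite IHl, dT_self. unfold Rmin, Rmax; repeat destruct Rle_dec; lra. Qed.

Lemma ldist_len l l' : ldist dT l l' < 1 -> length l = length l'.
Proof.
  revert l'; induction l as [|a l IH]; intros [|b l']; simpl; intros H; try lra; auto.
  f_equal. apply IH. eapply Rle_lt_trans; [apply Rmax_r|exact H].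
Qed.

Lemma ldist_nth l l' i d0 : ldist dT l l' < 1 -> Rmin 1 (dT (nth i l d0) (nth i l' d0)) <= ldist dT l l'.
Proof.
  revert l' i; induction l as [|a l IH]; intros [|b l'] i; simpl; intros H; try lra.
  - destruct i; rewrite dT_self; unfold Rmin; destruct Rle_dec; lra.
  - destruct i.
    + apply Rmax_l.
    + eapply Rle_trans; [apply IH|apply Rmax_r]. eapply Rle_lt_trans; [apply Rmax_r|exact H].
Qed.

Lemma metric_list : is_metric (ldist dT).
Proof.
  split; [|split; [|split]].
  - intros; apply ldist_bound.
  - intros l l'. split; [|intros ->; apply ldist_self].
    revert l'; induction l as [|a l IH]; intros [|b l']; simpl; intros H; try lra; auto.
    pose proof (ldist_bound l l'). pose proof (dT_pos a b).
    assert (Q1 : Rmin 1 (dT a b) <= 0) by (rewrite <- H; apply Rmax_l).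
    assert (Q2 : ldist dT l l' <= 0) by (rewrite <- H; apply Rmax_r).
    assert (dT a b = 0) by (unfold Rmin in Q1; destruct Rle_dec; lra).
    f_equal; [apply MT; auto|apply IH; lra].
  - induction x as [|a l IH]; intros [|b l']; simpl; auto. rewrite IH, (proj1 (proj2 (proj2 MT)) a b). reflexivity.
  - induction x as [|a l IH]; intros [|b l'] [|c l''].
    + simpl; lra.
    + simpl; lra.
    + simpl; lra.
    + pose proof (ldist_bound (b :: l') (c :: l'')). simpl ldist at 1 2. lra.
    + simpl; lra.
    + pose proof (ldist_bound (a :: l) (c :: l'')). simpl ldist at 2 3. lra.
    + pose proof (ldist_bound (a :: l) (b :: l')). simpl ldist at 1 3. lra.
    + simpl. specialize (IH l' l''). pose proof (proj2 (proj2 (proj2 MT)) a b c).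
      pose proof (dT_pos a b). pose proof (dT_pos b c). pose proof (dT_pos a c).
      unfold Rmin, Rmax in *; repeat destruct Rle_dec; lra.
Qed.

End Lists.

Section ListsPolish.
Context {T : Type} (dT : T -> T -> R) (PT : polish dT).

Lemma lcomplete_k k : forall v : nat -> list T, (forall n, length (v n) = k) ->
  cauchy (ldist dT) v -> exists l, converges_to (ldist dT) v l.
Proof.
  destruct PT as (MT & CT & _).
  induction k as [|k IH]; intros v Hl Hc.
  - exists []. intros eps He. exists 0%nat. intros n _. specialize (Hl n).
    destruct (v n) eqn:E; [simpl; lra|]. discriminate.
  - destruct (v 0%nat) as [|a0 l0] eqn:E0. { specialize (Hl 0%nat). rewrite E0 in Hl; discriminate. }
    set (h := fun n => hd a0 (v n)). set (t := fun n => tl (v n)).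
    assert (Hv : forall n, v n = h n :: t n).
    { intros n. unfold h, t. specialize (Hl n). destruct (v n); [discriminate|reflexivity]. }
    destruct (CT h) as [lh Hlh].
    { intros eps He. destruct (Hc (Rmin eps 1) ltac:(apply Rmin_glb_lt; lra)) as [N HN]. exists N.
      intros n m Hn Hm. specialize (HN n m Hn Hm). rewrite !Hv in HN. simpl in HN.
      assert (Hr : Rmin 1 (dT (h n) (h m)) < Rmin eps 1) by (eapply Rle_lt_trans; [apply Rmax_l|exact HN]).
      unfold Rmin in Hr; repeat destruct Rle_dec; lra. }
    destruct (IH t) as [lt Hlt].
    { intros n. specialize (Hl n). rewrite Hv in Hl. simpl in Hl. lia. }
    { intros eps He. destruct (Hc eps He) as [N HN]. exists N. intros n m Hn Hm.
      specialize (HN n m Hn Hm). rewrite !Hv in HN. simpl in HN. eapply Rle_lt_trans; [apply Rmax_r|exact HN]. }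
    exists (lh :: lt). intros eps He. destruct (Hlh eps He) as [N1 H1]. destruct (Hlt eps He) as [N2 H2].
    exists (max N1 N2). intros n Hn. rewrite Hv. simpl. apply Rmax_lub_lt.
    + eapply Rle_lt_trans; [apply Rmin_r|apply H1; lia].
    + apply H2; lia.
Qed.

Lemma lcomplete : complete (ldist dT).
Proof.
  intros u Hu. destruct (Hu 1 ltac:(lra)) as [N HN].
  set (v := fun n => u (n + N)%nat).
  destruct (lcomplete_k (length (u N)) v) as [l Hl].
  - intros n. unfold v. symmetry. apply (ldist_len dT). apply HN; lia.
  - intros eps He. destruct (Hu eps He) as [M HM]. exists M. intros n m Hn Hm. apply HM; lia.
  - exists l. intros eps He. destruct (Hl eps He) as [M HM]. exists (M + N)%nat. intros n Hn.
    replace n with ((n - N) + N)%nat by lia. apply (HM (n - N)%nat). lia.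
Qed.

Fixpoint ldec (e : nat -> option T) (k m : nat) : option (list T) :=
  match k with
  | O => Some []
  | S k' => let (a, b) := Cantor.of_nat m in
            match e a, ldec e k' b with Some x, Some l => Some (x :: l) | _, _ => None end
  end.

Lemma lsep : separable (ldist dT).
Proof.
  destruct PT as (MT & CT & [e He]).
  exists (fun n => let (k, m) := Cantor.of_nat n in ldec e k m).
  assert (H : forall l eps, 0 < eps -> exists m l', ldec e (length l) m = Some l' /\ ldist dT l l' < eps).
  { induction l as [|x l IH]; intros eps Hp.
    - exists 0%nat, []. simpl. split; [reflexivity|lra].
    - destruct (He x eps Hp) as (a & y & Ea & Hy). destruct (IH eps Hp) as (b & l' & Eb & Hl').
      exists (Cantor.to_nat (a, b)), (y :: l'). cbn [length ldec].
      rewrite Cantor.cancel_of_to, Ea, Eb. split; [reflexivity|].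
      simpl. apply Rmax_lub_lt; auto. eapply Rle_lt_trans; [apply Rmin_r|exact Hy]. }
  intros l eps Hp. destruct (H l eps Hp) as (m & l' & E & Hd).
  exists (Cantor.to_nat (length l, m)), l'. rewrite Cantor.cancel_of_to. split; auto.
Qed.

Lemma polish_list : polish (ldist dT).
Proof. split; [apply metric_list, PT|split; [apply lcomplete|apply lsep]]. Qed.

End ListsPolish.

Lemma compact_borel {A : Type} (dA : A -> A -> R) (MA : is_metric dA) (K : A -> Prop) : Defs.compact dA K -> borel dA K.
Proof.
  intros HK. apply borel_closed. intros x Hx.
  destruct MA as (M1 & M2 & M3 & M4).
  set (U := fun (n : nat) (y : A) => / INR (S n) < dA x y).
  destruct (HK nat U) as [l Hl].
  - intros n y Hy. exists (dA x y - / INR (S n)). split; [unfold U in Hy; lra|]. intros y' Hy'. unfold U in *.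
    pose proof (M4 x y' y). pose proof (M3 y' y). lra.
  - intros y Hy. assert (y <> x) by (intro; subst; contradiction).
    assert (Hp : 0 < dA x y).
    { pose proof (M1 x y). destruct (Req_dec (dA x y) 0) as [E|E]; [|lra]. apply M2 in E. congruence. }
    destruct (small_inv _ Hp) as [n Hn]. exists n. exact Hn.
  - assert (HN : exists N, forall i, In i l -> (i <= N)%nat).
    { clear Hl. induction l as [|a l [N HN]]; [exists 0%nat; simpl; tauto|].
      exists (max a N). intros i [<-|Hi]; [lia|]. specialize (HN i Hi). lia. }
    destruct HN as [N HN]. exists (/ INR (S N)). split; [apply Rinv_0_lt_compat, lt_0_INR; lia|].
    intros y Hy Ky. destruct (Hl y Ky) as (i & Hi & Hu). unfold U in Hu.
    assert (/ INR (S N) <= / INR (S i)).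
    { apply Rinv_le_contravar; [apply lt_0_INR; lia| apply le_INR; specialize (HN i Hi); lia]. }
    lra.
Qed.

Definition Qv (n a1 a2 : nat) : R := IZR (Z.of_nat a1 - Z.of_nat a2) / INR (S n).

Lemma Qv_dense r s : r < s -> exists n a1 a2, r < Qv n a1 a2 < s.
Proof.
  intros Hrs. destruct (small_inv (s - r) ltac:(lra)) as [n Hn].
  set (N := INR (S n)). assert (HN : 0 < N) by (apply lt_0_INR; lia). fold N in Hn.
  set (k := up (r * N)). destruct (archimed (r * N)) as [A1 A2]. fold k in A1, A2.
  exists n, (Z.to_nat k), (Z.to_nat (- k)). unfold Qv. fold N.
  replace (Z.of_nat (Z.to_nat k) - Z.of_nat (Z.to_nat (- k)))%Z with k by lia.
  set (q := IZR k) in *.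
  assert (Hi : 0 < / N) by (apply Rinv_0_lt_compat; lra).
  assert (E : q / N = r + (q - r * N) * / N) by (field; lra).
  rewrite E. split.
  - assert (0 < (q - r * N) * / N) by (apply Rmult_lt_0_compat; lra). lra.
  - assert ((q - r * N) * / N <= 1 * / N) by (apply Rmult_le_compat_r; lra). lra.
Qed.

Section Graph.
Variable X : Type.
Variable d : X -> X -> R.
Variable dL : X -> X -> ER.
Hypothesis HdLB : borel_fun (prod_metric d d) (fun p => dL (fst p) (snd p)).

Definition dXR := prod_metric (prod_metric d d) dR.

Definition LEs (q : (X*X)*R) : Prop := ele (dL (fst (fst q)) (snd (fst q))) (Fin (snd q)).

Lemma LEs_borel : borel dXR LEs.
Proof.
  apply (borel_ext dXR (fun q => forall n a1 a2, Qv n a1 a2 <= snd q \/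
            ele (dL (fst (fst q)) (snd (fst q))) (Fin (Qv n a1 a2)))).
  - intros [[x y] r]. unfold LEs. simpl. split.
    + intros H. destruct (dL x y) as [s|] eqn:E; simpl in *.
      * destruct (Rle_dec s r) as [|Hsr]; auto. exfalso. apply Rnot_le_lt in Hsr.
        destruct (Qv_dense r s Hsr) as (n & a1 & a2 & Q1 & Q2). destruct (H n a1 a2); lra.
      * destruct (Qv_dense r (r + 1) ltac:(lra)) as (n & a1 & a2 & Q1 & Q2). destruct (H n a1 a2); lra.
    + intros H n a1 a2. destruct (dL x y) as [s|] eqn:E; simpl in *; [|contradiction].
      destruct (Rle_dec (Qv n a1 a2) r); [left; auto|right; lra].
  - apply borel_cinter; intros n. apply borel_cinter; intros a1. apply borel_cinter; intros a2.
    apply borel_union2.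
    + apply borel_leR; [apply contf_const; apply metric_R; reflexivity| apply contf_snd].
    + apply (borel_preimage dXR (prod_metric d d) fst (fun p => ele (dL (fst p) (snd p)) (Fin (Qv n a1 a2)))).
      * apply contf_fst.
      * apply HdLB.
Qed.



Definition GRs (q : (X*X)*R) : Prop := dL (fst (fst q)) (snd (fst q)) = Fin (snd q).

Lemma dR_self c : dR c c = 0.
Proof. apply metric_R. reflexivity. Qed.

Lemma GRs_borel : borel dXR GRs.
Proof.
  apply (borel_ext dXR (fun q => LEs q /\ forall n, ~ LEs (fst q, snd q + - / INR (S n)))).
  - intros [[x y] r]. unfold GRs, LEs. cbn [fst snd]. split.
    + intros [H1 H2]. destruct (dL x y) as [s|]; cbn [fst snd ele] in *; [|contradiction].
      destruct (Rle_lt_or_eq_dec s r H1) as [Hlt| ->]; [|reflexivity]. exfalso.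
      destruct (small_inv (r - s) ltac:(lra)) as [n Hn]. apply (H2 n). lra.
    + intros ->. cbn [fst snd ele]. split; [lra|]. intros n.
      assert (0 < / INR (S n)) by (apply Rinv_0_lt_compat, lt_0_INR; lia). lra.
  - apply borel_inter2; [apply LEs_borel; auto|]. apply borel_cinter; intros n. apply borel_compl.
    apply (borel_preimage dXR dXR (fun q => (fst q, snd q + - / INR (S n))) (LEs));
      [|apply LEs_borel; auto].
    apply contf_pair; [apply contf_fst|].
    apply (contf_plus dXR snd (fun _ => - / INR (S n))); [apply contf_snd|].
    apply contf_const. apply dR_self.
Qed.

End Graph.

Lemma contf_nth {T : Type} (dT : T -> T -> R) (MT : is_metric dT) (i : nat) (e0 : T) :
  contf (ldist dT) dT (fun l => nth i l e0).
Proof.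
  intros l eps He. exists (Rmin eps 1). split; [apply Rmin_glb_lt; lra|]. intros l' Hl.
  assert (H1 : ldist dT l l' < 1) by (eapply Rlt_le_trans; [exact Hl|apply Rmin_r]).
  pose proof (ldist_nth dT MT l l' i e0 H1) as H2.
  assert (H3 : Rmin 1 (dT (nth i l e0) (nth i l' e0)) < Rmin eps 1) by lra.
  unfold Rmin in H3; repeat destruct Rle_dec; lra.
Qed.

Definition er2r (a : ER) : R := match a with Fin r => r | PInf => 0 end.

Lemma fin_eq a : a <> PInf -> a = Fin (er2r a).
Proof. destruct a; simpl; congruence. Qed.

Lemma esum_fin n g f : (forall i, (i <= n)%nat -> g i = Fin (f i)) -> esum n g = Fin (sum_f_R0 f n).
Proof.
  induction n; intros H; simpl.
  - apply H; lia.
  - rewrite IHn by (intros; apply H; lia). rewrite H by lia. reflexivity.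
Qed.

Lemma esum_notinf n g : esum n g <> PInf -> forall i, (i <= n)%nat -> g i <> PInf.
Proof.
  induction n; simpl; intros H i Hi.
  - assert (i = 0%nat) by lia; subst; auto.
  - destruct (esum n g) eqn:E; destruct (g (S n)) eqn:E2; try (exfalso; apply H; reflexivity).
    destruct (Nat.eq_dec i (S n)).
    + subst; congruence.
    + apply IHn; [congruence| lia].
Qed.

Lemma esum_pinf n g i : (i <= n)%nat -> g i = PInf -> esum n g = PInf.
Proof.
  intros Hi Hg. destruct (esum n g) eqn:E; [|reflexivity].
  exfalso. refine (esum_notinf n g _ i Hi Hg). rewrite E; discriminate.
Qed.

Lemma ele_pinf a : ele a PInf.
Proof. destruct a; simpl; auto. Qed.

Lemma cnext_lt n i : (i < n)%nat -> cnext n i = S i.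
Proof. intros. unfold cnext. destruct (Nat.eqb_spec i n); lia. Qed.
Lemma cnext_n n : cnext n n = 0%nat.
Proof. unfold cnext. rewrite Nat.eqb_refl. reflexivity. Qed.
Lemma cnext_le n i : (i <= n)%nat -> (cnext n i <= n)%nat.
Proof. intros. unfold cnext. destruct (Nat.eqb_spec i n); lia. Qed.

Section Comb.
Variable X : Type.
Variable dL : X -> X -> ER.
Hypothesis HdL : ext_distance dL.
Variable Gam : X * X -> Prop.
Hypothesis Hfin : forall p, Gam p -> dL (fst p) (snd p) <> PInf.
Hypothesis Hcm : cyc_mono dL Gam.

Definition D a b := er2r (dL a b).

Lemma tri a b c : dL a b <> PInf -> dL b c <> PInf -> dL a c <> PInf /\ D a c <= D a b + D b c.
Proof.
  intros H1 H2. destruct HdL as [_ [_ [_ Ht]]]. specialize (Ht a b c). unfold D.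
  destruct (dL a b); destruct (dL b c); try congruence. destruct (dL a c); simpl in *; try tauto.
  split; [discriminate|lra].
Qed.

Lemma dsym a b : dL a b = dL b a.
Proof. destruct HdL as [_ [_ [Hs _]]]. apply Hs. Qed.

Lemma dself a : dL a a = Fin 0.
Proof. destruct HdL as [_ [Hz _]]. apply Hz. reflexivity. Qed.

Definition hw (L : list (X*X)) (s : X) : X := match L with [] => s | q :: _ => fst q end.
Fixpoint csum (L : list (X*X)) : R := match L with [] => 0 | q :: L' => D (fst q) (snd q) + csum L' end.
Fixpoint lsum (L : list (X*X)) (s : X) : R :=
  match L with [] => 0 | q :: L' => D (hw L' s) (snd q) + lsum L' s end.
Fixpoint lfin (L : list (X*X)) (s : X) : Prop :=
  match L with [] => True | q :: L' => dL (hw L' s) (snd q) <> PInf /\ lfin L' s end.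

Lemma csum_nth L d n : length L = S n ->
  csum L = sum_f_R0 (fun i => D (fst (nth i L d)) (snd (nth i L d))) n.
Proof.
  revert n. induction L as [|q L IH]; intros n Hn; simpl in Hn. discriminate. injection Hn as Hn.
  destruct n.
  - destruct L; simpl in *; [lra | discriminate].
  - rewrite (decomp_sum _ (S n)) by lia. simpl (pred _). simpl. rewrite (IH n Hn). reflexivity.
Qed.

Lemma lsum_nth L s n : length L = S n ->
  lsum L s = sum_f_R0 (fun i => D (fst (nth (S i) L (s,s))) (snd (nth i L (s,s)))) n.
Proof.
  revert n. induction L as [|q L IH]; intros n Hn; simpl in Hn. discriminate. injection Hn as Hn.
  destruct n.
  - destruct L; simpl in *; [lra | discriminate].
  - rewrite (decomp_sum _ (S n)) by lia. simpl (pred _). simpl. rewrite (IH n Hn).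
    destruct L; simpl in *; [discriminate|reflexivity].
Qed.

Lemma lfin_nth L s n : length L = S n ->
  (lfin L s <-> forall i, (i <= n)%nat -> dL (fst (nth (S i) L (s,s))) (snd (nth i L (s,s))) <> PInf).
Proof.
  revert n. induction L as [|q L IH]; intros n Hn; simpl in Hn. discriminate. injection Hn as Hn.
  destruct n.
  - destruct L; simpl in *; [|discriminate]. split.
    + intros [H _] i Hi. assert (i = 0%nat) by lia. subst. simpl. exact H.
    + intros H. split; [apply (H 0%nat); lia| exact I].
  - simpl. rewrite (IH n Hn). split.
    + intros [H1 H2] i Hi. destruct i.
      * destruct L; simpl in *; [discriminate| exact H1].
      * apply H2; lia.
    + intros H. split.
      * destruct L; simpl in *; [discriminate|]. apply (H 0%nat); lia.
      * intros i Hi. apply (H (S i)); lia.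
Qed.

Lemma nth_shift (L : list (X*X)) (d : X*X) n i : length L = S n -> (i <= n)%nat ->
  fst (nth (cnext n i) L d) = fst (nth (S i) L (fst (nth 0 L d), fst (nth 0 L d))) /\
  nth i L d = nth i L (fst (nth 0 L d), fst (nth 0 L d)).
Proof.
  intros Hl Hi. split; [|apply nth_indep; lia].
  destruct (Nat.eq_dec i n).
  - subst. rewrite cnext_n. rewrite (@nth_overflow _ L (S n)) by lia. reflexivity.
  - rewrite cnext_lt by lia. f_equal. apply nth_indep. lia.
Qed.

Lemma lsum_cnext L d n : length L = S n ->
  lsum L (fst (nth 0 L d)) = sum_f_R0 (fun i => D (fst (nth (cnext n i) L d)) (snd (nth i L d))) n.
Proof.
  intros Hl. rewrite (lsum_nth _ _ n Hl). apply sum_eq. intros i Hi.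
  destruct (nth_shift L d n i Hl Hi) as [E1 E2]. rewrite E1, E2. reflexivity.
Qed.

Lemma lfin_cnext L d n : length L = S n ->
  (lfin L (fst (nth 0 L d)) <-> forall i, (i <= n)%nat -> dL (fst (nth (cnext n i) L d)) (snd (nth i L d)) <> PInf).
Proof.
  intros Hl. rewrite (lfin_nth _ _ n Hl). split; intros H i Hi;
  destruct (nth_shift L d n i Hl Hi) as [E1 E2]; [rewrite E1, E2|rewrite <- E1, <- E2]; auto.
Qed.

Lemma gam_list q L' : (forall p, In p (q :: L') -> Gam p) -> lfin (q :: L') (fst q) ->
  csum (q :: L') <= lsum (q :: L') (fst q).
Proof.
  intros HG Hf. set (L := q :: L'). set (n := length L').
  assert (Hl : length L = S n) by reflexivity.
  pose proof (Hcm n (fun i => fst (nth i L q)) (fun i => snd (nth i L q))) as H.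
  change (lfin L (fst (nth 0 L q))) in Hf. change (csum L <= lsum L (fst (nth 0 L q))).
  rewrite (lfin_cnext L q n Hl) in Hf.
  rewrite (csum_nth L q n Hl), (lsum_cnext L q n Hl).
  rewrite (esum_fin n _ (fun i => D (fst (nth i L q)) (snd (nth i L q)))) in H.
  - rewrite (esum_fin n _ (fun i => D (fst (nth (cnext n i) L q)) (snd (nth i L q)))) in H.
    + apply H. intros i Hi. rewrite <- surjective_pairing. apply HG. apply nth_In. unfold L, n in *; simpl; lia.
    + intros i Hi. apply fin_eq. apply Hf. exact Hi.
  - intros i Hi. apply fin_eq. apply (Hfin (nth i L q)). apply HG. apply nth_In. unfold L, n in *; simpl; lia.
Qed.

Definition vchain (p : X*X) (C : list (X*X)) : Prop :=
  C <> [] /\ hw C (fst p) = fst p /\ snd (last C p) = snd p /\ (forall q, In q C -> Gam q) /\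
  lfin C (fst p) /\ lsum C (fst p) = csum C.

Lemma gamma'_chain p : Gamma' dL Gam p -> exists C, vchain p C.
Proof.
  intros (I & w & z & HG & Hw & Hz & Heq).
  set (f := fun j : nat => (w j, z j)).
  set (C := map f (seq 0 (S I))).
  assert (Hl : length C = S I) by (unfold C; rewrite length_map, length_seq; reflexivity).
  assert (Hn : forall j d, (j <= I)%nat -> nth j C d = (w j, z j)).
  { intros j d Hj. unfold C. rewrite (nth_indep _ d (f 0%nat)) by (rewrite length_map, length_seq; lia).
    rewrite map_nth, seq_nth by lia. reflexivity. }
  assert (HR : esum I (fun i => dL (w i) (z i)) = Fin (sum_f_R0 (fun i => D (w i) (z i)) I)).
  { apply esum_fin. intros i Hi. apply fin_eq. apply (Hfin (w i, z i)). apply HG; lia. }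
  assert (HLf : forall i, (i <= I)%nat -> dL (w (cnext I i)) (z i) <> PInf).
  { apply esum_notinf. rewrite Heq, HR. discriminate. }
  assert (HL : esum I (fun i => dL (w (cnext I i)) (z i)) = Fin (sum_f_R0 (fun i => D (w (cnext I i)) (z i)) I)).
  { apply esum_fin. intros i Hi. apply fin_eq. auto. }
  rewrite HL, HR in Heq. injection Heq as Heq.
  assert (Hp0 : fst p = fst (nth 0 C p)) by (rewrite Hn by lia; simpl; congruence).
  exists C. split; [|split; [|split; [|split; [|split]]]].
  - intro E. rewrite E in Hl. discriminate.
  - unfold C. simpl. congruence.
  - unfold C. rewrite seq_S, map_app. cbn [map]. rewrite last_last. simpl. congruence.
  - intros q Hq. unfold C in Hq. apply in_map_iff in Hq. destruct Hq as (j & <- & Hj).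
    apply in_seq in Hj. apply (HG j). lia.
  - rewrite Hp0. apply (lfin_cnext C p I Hl). intros i Hi.
    rewrite !Hn by (try apply cnext_le; lia). simpl. auto.
  - rewrite Hp0, (lsum_cnext C p I Hl), (csum_nth C p I Hl).
    transitivity (sum_f_R0 (fun i => D (w (cnext I i)) (z i)) I).
    + apply sum_eq. intros i Hi. rewrite !Hn by (try apply cnext_le; lia). reflexivity.
    + rewrite Heq. apply sum_eq. intros i Hi. rewrite !Hn by lia. reflexivity.
Qed.

Lemma csum_app C R0 : csum (C ++ R0) = csum C + csum R0.
Proof. induction C; simpl; [lra| rewrite IHC; lra]. Qed.

Lemma hw_app C R0 s : hw (C ++ R0) s = hw C (hw R0 s).
Proof. destruct C; reflexivity. Qed.

Lemma lsum_app C R0 s : lsum (C ++ R0) s = lsum C (hw R0 s) + lsum R0 s.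
Proof. induction C as [|q C IH]; simpl; [lra|]. rewrite IH, hw_app. lra. Qed.

Lemma lfin_app C R0 s : lfin C (hw R0 s) -> lfin R0 s -> lfin (C ++ R0) s.
Proof. induction C as [|q C IH]; simpl; auto. rewrite hw_app. tauto. Qed.

Lemma lsum_change C t t' e : C <> [] ->
  lsum C t = lsum C t' - D t' (snd (last C e)) + D t (snd (last C e)).
Proof.
  induction C as [|q C IH]; intros Hne; [congruence|]. destruct C as [|q' C].
  - simpl. lra.
  - change (last (q :: q' :: C) e) with (last (q' :: C) e).
    change (lsum (q :: q' :: C) t) with (D (fst q') (snd q) + lsum (q' :: C) t).
    change (lsum (q :: q' :: C) t') with (D (fst q') (snd q) + lsum (q' :: C) t').
    rewrite (IH ltac:(discriminate)). lra.
Qed.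

Lemma lfin_change C t t' e : C <> [] -> lfin C t' -> dL t (snd (last C e)) <> PInf -> lfin C t.
Proof.
  induction C as [|q C IH]; intros Hne; [congruence|]. destruct C as [|q' C].
  - simpl. tauto.
  - change (last (q :: q' :: C) e) with (last (q' :: C) e).
    change (lfin (q :: q' :: C) t) with (dL (fst q') (snd q) <> PInf /\ lfin (q' :: C) t).
    change (lfin (q :: q' :: C) t') with (dL (fst q') (snd q) <> PInf /\ lfin (q' :: C) t').
    intros [H1 H2] H3. split; [exact H1|]. apply IH; auto. discriminate.
Qed.

Lemma chains_exist P : (forall p, In p P -> Gamma' dL Gam p) ->
  exists R0 : list ((X*X) * list (X*X)), map fst R0 = P /\ forall r, In r R0 -> vchain (fst r) (snd r).
Proof.
  induction P as [|p P IH]; intros H.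
  - exists []. simpl. split; [reflexivity| tauto].
  - destruct (gamma'_chain p (H p (or_introl eq_refl))) as [C HC].
    destruct IH as [R0 [E HR]]. { intros; apply H; right; auto. }
    exists ((p, C) :: R0). simpl. rewrite E. split; [reflexivity|]. intros r [<-|Hr]; auto.
Qed.

Definition flat (R0 : list ((X*X) * list (X*X))) := flat_map snd R0.

Lemma flat_props R0 s : (forall r, In r R0 -> vchain (fst r) (snd r)) ->
  hw (flat R0) s = hw (map fst R0) s /\
  lsum (flat R0) s = csum (flat R0) - csum (map fst R0) + lsum (map fst R0) s /\
  (lfin (map fst R0) s -> lfin (flat R0) s).
Proof.
  induction R0 as [|[p C] R0 IH]; intros HR.
  - simpl. split; [reflexivity|split; [lra|auto]].
  - destruct IH as [IH1 [IH2 IH3]]. { intros; apply HR; right; auto. }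
    destruct (HR (p, C) (or_introl eq_refl)) as (Hne & Hhw & Hlast & HG & Hlf & Hls).
    cbn [fst snd] in Hhw, Hlast, HG, Hlf, Hls.
    change (flat ((p, C) :: R0)) with (C ++ flat R0).
    change (map fst ((p, C) :: R0)) with (p :: map fst R0).
    split; [|split].
    + rewrite hw_app. destruct C as [|c0 C0]; [exfalso; apply Hne; reflexivity|]. exact Hhw.
    + rewrite lsum_app, csum_app, IH1, IH2.
      rewrite (lsum_change C (hw (map fst R0) s) (fst p) p Hne). rewrite Hlast, Hls.
      change (csum (p :: map fst R0)) with (D (fst p) (snd p) + csum (map fst R0)).
      change (lsum (p :: map fst R0) s) with (D (hw (map fst R0) s) (snd p) + lsum (map fst R0) s).
      lra.
    + intros [H1 H2]. apply lfin_app.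
      * rewrite IH1. apply (lfin_change C _ (fst p) p Hne Hlf). rewrite Hlast. exact H1.
      * auto.
Qed.

Lemma gp_list p P' : (forall q, In q (p :: P') -> Gamma' dL Gam q) -> lfin (p :: P') (fst p) ->
  csum (p :: P') <= lsum (p :: P') (fst p).
Proof.
  intros HP Hf. destruct (chains_exist _ HP) as [R0 [E HR]].
  destruct R0 as [|[p0 C] R1]; [discriminate|]. simpl in E. injection E as E1 E2. subst p0 P'.
  destruct (flat_props ((p, C) :: R1) (fst p) HR) as [H1 [H2 H3]].
  destruct (HR (p, C) (or_introl eq_refl)) as (Hne & Hhw & _ & HG & _).
  destruct C as [|c C']; [exfalso; apply Hne; reflexivity|].
  assert (Hc : fst c = fst p) by exact Hhw.
  pose proof (gam_list c (C' ++ flat R1)) as G. rewrite Hc in G.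
  assert (H : csum (flat ((p, c :: C') :: R1)) <= lsum (flat ((p, c :: C') :: R1)) (fst p)).
  { apply G.
    - intros q Hq. change (In q (flat ((p, c :: C') :: R1))) in Hq.
      unfold flat in Hq. apply in_flat_map in Hq. destruct Hq as (r & Hr & Hq).
      exact (proj1 (proj2 (proj2 (proj2 (HR r Hr)))) q Hq).
    - apply H3. exact Hf. }
  change (map fst ((p, c :: C') :: R1)) with (p :: map fst R1) in H2.
  lra.
Qed.

Definition geo (q w : X*X) : Prop :=
  Gamma' dL Gam w /\ dL (fst w) (fst q) <> PInf /\ dL (fst q) (snd q) <> PInf /\
  dL (snd q) (snd w) <> PInf /\
  D (fst w) (snd w) = D (fst w) (fst q) + D (fst q) (snd q) + D (snd q) (snd w).

Lemma chain_fin w z : Gamma' dL Gam (w, z) -> dL w z <> PInf.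
Proof.
  intros (I & ws & zs & HG & Hw & Hz & Heq). simpl in Hw, Hz. subst w z.
  assert (HR : esum I (fun i => dL (ws i) (zs i)) <> PInf).
  { rewrite (esum_fin I _ (fun i => D (ws i) (zs i))). discriminate.
    intros i Hi. apply fin_eq. apply (Hfin (ws i, zs i)). apply HG; lia. }
  rewrite <- Heq in HR. pose proof (esum_notinf _ _ HR) as HL.
  assert (H : forall j, (j <= I)%nat -> dL (ws 0%nat) (zs j) <> PInf).
  { induction j; intros Hj.
    - apply (Hfin (ws 0%nat, zs 0%nat)). apply HG; lia.
    - assert (A1 : dL (zs j) (ws (S j)) <> PInf).
      { rewrite dsym. specialize (HL j). cbv beta in HL. rewrite cnext_lt in HL by lia. apply HL; lia. }
      assert (A2 : dL (ws (S j)) (zs (S j)) <> PInf) by (apply (Hfin (ws (S j), zs (S j))); apply HG; lia).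
      destruct (tri _ _ _ A1 A2) as [A3 _].
      destruct (tri (ws 0%nat) (zs j) (zs (S j)) (IHj ltac:(lia)) A3) as [A4 _]. exact A4. }
  apply H; lia.
Qed.

Lemma eadd3 a b c e : eadd (eadd a b) c = e -> e <> PInf ->
  a <> PInf /\ b <> PInf /\ c <> PInf /\ er2r e = er2r a + er2r b + er2r c.
Proof. destruct a, b, c; simpl; intros H1 H2; subst; try congruence. repeat split; try discriminate. Qed.

Lemma grays_geo q : Grays dL Gam q -> exists w, geo q w.
Proof.
  intros (w & z & HG & He). exists (w, z).
  pose proof (chain_fin w z HG) as Hf.
  destruct (eadd3 _ _ _ _ He Hf) as (A1 & A2 & A3 & A4).
  unfold geo, D. simpl. tauto.
Qed.

Lemma grays_fin q : Grays dL Gam q -> dL (fst q) (snd q) <> PInf.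
Proof. intros H. destruct (grays_geo q H) as [w Hw]. apply Hw. Qed.

Lemma geo_exist Q : (forall q, In q Q -> Grays dL Gam q) ->
  exists R0 : list ((X*X)*(X*X)), map fst R0 = Q /\ forall r, In r R0 -> geo (fst r) (snd r).
Proof.
  induction Q as [|q Q IH]; intros H.
  - exists []. simpl. split; [reflexivity| tauto].
  - destruct (grays_geo q (H q (or_introl eq_refl))) as [w Hw].
    destruct IH as [R0 [E HR]]. { intros; apply H; right; auto. }
    exists ((q, w) :: R0). simpl. rewrite E. split; [reflexivity|]. intros r [<-|Hr]; auto.
Qed.

Fixpoint swx (R0 : list ((X*X)*(X*X))) : R :=
  match R0 with [] => 0 | r :: R1 => D (fst (snd r)) (fst (fst r)) + swx R1 end.
Fixpoint syz (R0 : list ((X*X)*(X*X))) : R :=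
  match R0 with [] => 0 | r :: R1 => D (snd (fst r)) (snd (snd r)) + syz R1 end.

Lemma csum_geo R0 : (forall r, In r R0 -> geo (fst r) (snd r)) ->
  csum (map snd R0) = swx R0 + csum (map fst R0) + syz R0.
Proof.
  induction R0 as [|r R0 IH]; intros HR; simpl; [lra|].
  rewrite IH by (intros; apply HR; right; auto).
  destruct (HR r (or_introl eq_refl)) as (_ & _ & _ & _ & E). rewrite E. lra.
Qed.

Lemma claim r R1 ws xs : (forall r', In r' (r :: R1) -> geo (fst r') (snd r')) ->
  lfin (map fst (r :: R1)) xs -> dL ws xs <> PInf ->
  lfin (map snd (r :: R1)) ws /\
  lsum (map snd (r :: R1)) ws + D (fst (snd r)) (fst (fst r)) <=
    swx (r :: R1) + D ws xs + lsum (map fst (r :: R1)) xs + syz (r :: R1).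
Proof.
  revert r. induction R1 as [|r' R1 IH]; intros r HR Hf Hws.
  - destruct (HR r (or_introl eq_refl)) as (_ & _ & _ & Hyz & _).
    destruct r as [[x y] [w z]]. cbn [map fst snd hw lfin lsum swx syz] in *.
    destruct Hf as [Hf _].
    destruct (tri _ _ _ Hws Hf) as [B1 B2].
    destruct (tri _ _ _ B1 Hyz) as [B3 B4].
    split; [tauto|lra].
  - destruct (HR r (or_introl eq_refl)) as (_ & _ & _ & Hyz & _).
    destruct (HR r' (or_intror (or_introl eq_refl))) as (_ & Hwx' & _ & _ & _).
    destruct Hf as [Hf1 Hf2].
    destruct (IH r' ltac:(intros; apply HR; right; auto) Hf2 Hws) as [I1 I2].
    destruct r as [[x y] [w z]]. destruct r' as [[x' y'] [w' z']].
    cbn [map fst snd hw lfin lsum swx syz] in *.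
    destruct (tri _ _ _ Hwx' Hf1) as [B1 B2].
    destruct (tri _ _ _ B1 Hyz) as [B3 B4].
    split; [tauto|lra].
Qed.

Lemma g_list q Q' : (forall p, In p (q :: Q') -> Grays dL Gam p) -> lfin (q :: Q') (fst q) ->
  csum (q :: Q') <= lsum (q :: Q') (fst q).
Proof.
  intros HQ Hf. destruct (geo_exist _ HQ) as [R0 [E HR]].
  destruct R0 as [|r R1]; [discriminate|]. injection E as E1 E2.
  destruct r as [q0 w]. simpl in E1. subst q0 Q'.
  destruct (HR (q, w) (or_introl eq_refl)) as (Hw & Hwx & _ & _ & _).
  destruct (claim (q, w) R1 (fst w) (fst q) HR Hf Hwx) as [Hl Hi].
  pose proof (gp_list w (map snd R1)) as G.
  assert (H : csum (map snd ((q,w)::R1)) <= lsum (map snd ((q,w)::R1)) (fst w)).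
  { apply G; [|exact Hl]. intros p [<-|Hp]; [exact Hw|].
    apply in_map_iff in Hp. destruct Hp as (r & <- & Hr). apply (HR r). right; exact Hr. }
  pose proof (csum_geo _ HR) as C.
  cbn [fst snd] in Hi.
  change (map fst ((q, w) :: R1)) with (q :: map fst R1) in *.
  change (swx ((q, w) :: R1)) with (D (fst w) (fst q) + swx R1) in *.
  lra.
Qed.

Lemma g_cyc : cyc_mono dL (Grays dL Gam).
Proof.
  intros n xs ys HG.
  destruct (classic (exists i, (i <= n)%nat /\ dL (xs (cnext n i)) (ys i) = PInf)) as [[i [Hi Hp]]|Hno].
  - rewrite (esum_pinf n _ i Hi Hp). apply ele_pinf.
  - assert (Hf : forall i, (i <= n)%nat -> dL (xs (cnext n i)) (ys i) <> PInf).
    { intros i Hi E. apply Hno. eauto. }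
    set (f := fun i : nat => (xs i, ys i)).
    set (Q := map f (seq 0 (S n))).
    assert (Hl : length Q = S n) by (unfold Q; rewrite length_map, length_seq; reflexivity).
    assert (Hn : forall j d, (j <= n)%nat -> nth j Q d = (xs j, ys j)).
    { intros j d Hj. unfold Q.
      rewrite (nth_indep _ d (f 0%nat)) by (rewrite length_map, length_seq; lia).
      rewrite map_nth, seq_nth by lia. reflexivity. }
    rewrite (esum_fin n _ (fun i => D (xs i) (ys i))).
    2:{ intros i Hi. apply fin_eq. apply (grays_fin (xs i, ys i)). auto. }
    rewrite (esum_fin n _ (fun i => D (xs (cnext n i)) (ys i))).
    2:{ intros i Hi. apply fin_eq. auto. }
    unfold ele.
    assert (E1 : csum Q = sum_f_R0 (fun i => D (xs i) (ys i)) n).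
    { rewrite (csum_nth Q (xs 0%nat, ys 0%nat) n Hl). apply sum_eq; intros; rewrite Hn by lia; reflexivity. }
    assert (Q0 : xs 0%nat = fst (nth 0 Q (xs 0%nat, ys 0%nat))) by (rewrite Hn by lia; reflexivity).
    assert (E2 : lsum Q (xs 0%nat) = sum_f_R0 (fun i => D (xs (cnext n i)) (ys i)) n).
    { rewrite Q0 at 1. rewrite (lsum_cnext Q _ n Hl). apply sum_eq; intros.
      rewrite !Hn by (try apply cnext_le; lia); reflexivity. }
    assert (E3 : lfin Q (xs 0%nat)).
    { rewrite Q0. apply (lfin_cnext Q _ n Hl). intros i Hi.
      rewrite !Hn by (try apply cnext_le; lia). simpl. auto. }
    rewrite <- E1, <- E2.
    apply (g_list (xs 0%nat, ys 0%nat) (map f (seq 1 n))); [|exact E3].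
    intros p Hp. change (In p Q) in Hp. unfold Q in Hp. apply in_map_iff in Hp.
    destruct Hp as (j & <- & Hj). apply in_seq in Hj. apply HG. lia.
Qed.


Lemma gp_in_g p : Gamma' dL Gam p -> Grays dL Gam p.
Proof.
  destruct p as [w z]. intros H. exists w, z. split; [exact H|]. cbn [fst snd].
  rewrite !dself. destruct (dL w z); simpl; [f_equal; ring|reflexivity].
Qed.

Variable d : X -> X -> R.
Hypothesis HX : polish d.
Hypothesis HdLB : borel_fun (prod_metric d d) (fun p => dL (fst p) (snd p)).
Hypothesis Hsc : sigma_compact (prod_metric d d) Gam.

Definition dY := prod_metric d d.
Definition dE := prod_metric dY (prod_metric dR dR).
Definition dC := prod_metric (prod_metric dR dR) (prod_metric dR dR).
Definition dZ := prod_metric (ldist dE) dC.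
Definition dT := prod_metric dY dZ.

Lemma PY : polish dY.
Proof. apply polish_prod; apply HX. Qed.
Lemma PE : polish dE.
Proof. apply polish_prod; [apply PY|apply polish_prod; apply polish_R]. Qed.
Lemma PZ : polish dZ.
Proof.
  apply polish_prod; [apply polish_list, PE|].
  apply polish_prod; apply polish_prod; apply polish_R.
Qed.

Lemma Gam_borel : borel dY Gam.
Proof.
  destruct Hsc as [K [HK HE]].
  apply (borel_ext dY (fun p => exists n, K n p)); [intros p; rewrite HE; tauto|].
  apply borel_cunion. intros n. apply compact_borel; [apply PY|apply HK].
Qed.

Variable e0 : (X*X)*(R*R).

Definition tel (i : nat) (t : (X*X) * (list ((X*X)*(R*R)) * ((R*R)*(R*R)))) := nth i (fst (snd t)) e0.
Definition tW i t := fst (fst (tel i t)).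
Definition tZ i t := snd (fst (tel i t)).
Definition tA i t := fst (snd (tel i t)).
Definition tB i t := snd (snd (tel i t)).
Definition tc1 (t : (X*X) * (list ((X*X)*(R*R)) * ((R*R)*(R*R)))) := fst (fst (snd (snd t))).
Definition tc2 (t : (X*X) * (list ((X*X)*(R*R)) * ((R*R)*(R*R)))) := snd (fst (snd (snd t))).
Definition tc3 (t : (X*X) * (list ((X*X)*(R*R)) * ((R*R)*(R*R)))) := fst (snd (snd (snd t))).
Definition tc4 (t : (X*X) * (list ((X*X)*(R*R)) * ((R*R)*(R*R)))) := snd (snd (snd (snd t))).
Definition tx (t : (X*X) * (list ((X*X)*(R*R)) * ((R*R)*(R*R)))) := fst (fst t).
Definition ty (t : (X*X) * (list ((X*X)*(R*R)) * ((R*R)*(R*R)))) := snd (fst t).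

Lemma c_el i : contf dT dE (tel i).
Proof.
  unfold tel. apply (contf_comp dT (ldist dE) dE (fun t => fst (snd t)) (fun l => nth i l e0)).
  - apply (contf_comp dT dZ (ldist dE) snd fst); [apply contf_snd|apply contf_fst].
  - apply contf_nth, PE.
Qed.

Lemma c_W i : contf dT d (tW i).
Proof.
  apply (contf_comp dT dE d (tel i) (fun e => fst (fst e))); [apply c_el|].
  apply (contf_comp dE dY d fst fst); apply contf_fst.
Qed.
Lemma c_Z i : contf dT d (tZ i).
Proof.
  apply (contf_comp dT dE d (tel i) (fun e => snd (fst e))); [apply c_el|].
  apply (contf_comp dE dY d fst snd); [apply contf_fst|apply contf_snd].
Qed.
Lemma c_A i : contf dT dR (tA i).
Proof.
  apply (contf_comp dT dE dR (tel i) (fun e => fst (snd e))); [apply c_el|].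
  apply (contf_comp dE (prod_metric dR dR) dR snd fst); [apply contf_snd|apply contf_fst].
Qed.
Lemma c_B i : contf dT dR (tB i).
Proof.
  apply (contf_comp dT dE dR (tel i) (fun e => snd (snd e))); [apply c_el|].
  apply (contf_comp dE (prod_metric dR dR) dR snd snd); apply contf_snd.
Qed.
Lemma c_C : contf dT dC (fun t => snd (snd t)).
Proof. apply (contf_comp dT dZ dC snd snd); apply contf_snd. Qed.
Lemma c_c1 : contf dT dR tc1.
Proof.
  apply (contf_comp dT dC dR (fun t => snd (snd t)) (fun c => fst (fst c))); [apply c_C|].
  apply (contf_comp dC (prod_metric dR dR) dR fst fst); apply contf_fst.
Qed.
Lemma c_c2 : contf dT dR tc2.
Proof.
  apply (contf_comp dT dC dR (fun t => snd (snd t)) (fun c => snd (fst c))); [apply c_C|].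
  apply (contf_comp dC (prod_metric dR dR) dR fst snd); [apply contf_fst|apply contf_snd].
Qed.
Lemma c_c3 : contf dT dR tc3.
Proof.
  apply (contf_comp dT dC dR (fun t => snd (snd t)) (fun c => fst (snd c))); [apply c_C|].
  apply (contf_comp dC (prod_metric dR dR) dR snd fst); [apply contf_snd|apply contf_fst].
Qed.
Lemma c_c4 : contf dT dR tc4.
Proof.
  apply (contf_comp dT dC dR (fun t => snd (snd t)) (fun c => snd (snd c))); [apply c_C|].
  apply (contf_comp dC (prod_metric dR dR) dR snd snd); apply contf_snd.
Qed.
Lemma c_x : contf dT d tx.
Proof. apply (contf_comp dT dY d fst fst); apply contf_fst. Qed.
Lemma c_y : contf dT d ty.
Proof. apply (contf_comp dT dY d fst snd); [apply contf_fst|apply contf_snd]. Qed.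

Lemma gr_cond u v r : contf dT d u -> contf dT d v -> contf dT dR r ->
  borel dT (fun t => GRs X dL ((u t, v t), r t)).
Proof.
  intros Hu Hv Hr.
  apply (borel_preimage dT (dXR X d) (fun t => ((u t, v t), r t)) (GRs X dL)); [|apply GRs_borel; exact HdLB].
  apply contf_pair; [apply contf_pair|]; auto.
Qed.

Lemma gam_cond i : borel dT (fun t => Gam (tW i t, tZ i t)).
Proof.
  apply (borel_preimage dT dY (fun t => (tW i t, tZ i t)) Gam); [|apply Gam_borel].
  apply contf_pair; [apply c_W|apply c_Z].
Qed.

Lemma len_cond k : borel dT (fun t => length (fst (snd t)) = k).
Proof.
  apply borel_open. intros t Ht. exists 1. split; [lra|]. intros t' H.
  rewrite <- Ht. symmetry. apply (ldist_len dE).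
  unfold dT, dZ, prod_metric in H.
  eapply Rle_lt_trans; [|exact H]. eapply Rle_trans; [|apply Rmax_r]. apply Rmax_l.
Qed.

Definition Bset (t : (X*X) * (list ((X*X)*(R*R)) * ((R*R)*(R*R)))) : Prop :=
  exists I, length (fst (snd t)) = S I /\
   (forall i, (i <= I)%nat -> Gam (tW i t, tZ i t) /\ GRs X dL ((tW (cnext I i) t, tZ i t), tA i t) /\
                               GRs X dL ((tW i t, tZ i t), tB i t)) /\
   sum_f_R0 (fun i => tA i t) I = sum_f_R0 (fun i => tB i t) I /\
   GRs X dL ((tW 0 t, tx t), tc1 t) /\ GRs X dL ((tx t, ty t), tc2 t) /\
   GRs X dL ((ty t, tZ I t), tc3 t) /\ GRs X dL ((tW 0 t, tZ I t), tc4 t) /\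
   tc1 t + tc2 t + tc3 t = tc4 t.

Lemma Bset_borel : borel dT Bset.
Proof.
  apply borel_cunion. intros I.
  apply borel_inter2; [apply len_cond|].
  apply borel_inter2.
  { apply borel_cinter. intros i. apply borel_impl. intros _.
    apply borel_inter2; [apply gam_cond|apply borel_inter2]; apply gr_cond; auto using c_W, c_Z, c_A, c_B. }
  apply borel_inter2.
  { apply borel_eqR; apply contf_sum; auto using c_A, c_B. }
  repeat apply borel_inter2; try (apply gr_cond; auto using c_W, c_Z, c_x, c_y, c_c1, c_c2, c_c3, c_c4).
  apply borel_eqR; [|apply c_c4]. repeat apply contf_plus; auto using c_c1, c_c2, c_c3.
Qed.

Lemma Bset_sound t : Bset t -> Grays dL Gam (fst t).
Proof.
  intros (I & Hlen & Hall & Hsum & G1 & G2 & G3 & G4 & Hc).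
  exists (tW 0 t), (tZ I t). split.
  - exists I, (fun i => tW i t), (fun i => tZ i t). split; [intros i Hi; apply Hall; exact Hi|].
    split; [reflexivity|]. split; [reflexivity|].
    rewrite (esum_fin I _ (fun i => tA i t)), (esum_fin I _ (fun i => tB i t)).
    + rewrite Hsum. reflexivity.
    + intros i Hi. destruct (Hall i Hi) as (_ & _ & H2). exact H2.
    + intros i Hi. destruct (Hall i Hi) as (_ & H1 & _). exact H1.
  - unfold GRs, tx, ty in G1, G2, G3, G4. cbn [fst snd] in G1, G2, G3, G4.
    cbn [fst snd]. rewrite G1, G2, G3, G4. cbn [eadd]. rewrite Hc. reflexivity.
Qed.

Lemma Bset_complete p : Grays dL Gam p -> exists z, Bset (p, z).
Proof.
  destruct p as [x y]. intros (w & z & HG' & He). cbn [fst snd] in He.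
  pose proof HG' as (I & ws & zs & HG & Hw & Hz & Heq). cbn [fst snd] in Hw, Hz.
  assert (HR : esum I (fun i => dL (ws i) (zs i)) = Fin (sum_f_R0 (fun i => D (ws i) (zs i)) I)).
  { apply esum_fin. intros i Hi. apply fin_eq. apply (Hfin (ws i, zs i)). apply HG; lia. }
  assert (HLf : forall i, (i <= I)%nat -> dL (ws (cnext I i)) (zs i) <> PInf).
  { apply esum_notinf. rewrite Heq, HR. discriminate. }
  assert (HL : esum I (fun i => dL (ws (cnext I i)) (zs i)) =
               Fin (sum_f_R0 (fun i => D (ws (cnext I i)) (zs i)) I)).
  { apply esum_fin. intros i Hi. apply fin_eq. auto. }
  rewrite HL, HR in Heq. injection Heq as Heq.
  pose proof (chain_fin w z HG') as Hf.
  destruct (eadd3 _ _ _ _ He Hf) as (A1 & A2 & A3 & A4).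
  set (f := fun j => ((ws j, zs j), (D (ws (cnext I j)) (zs j), D (ws j) (zs j)))).
  set (L := map f (seq 0 (S I))).
  assert (Hn : forall j, (j <= I)%nat -> nth j L e0 = f j).
  { intros j Hj. unfold L. rewrite (nth_indep _ e0 (f 0%nat)) by (rewrite length_map, length_seq; lia).
    rewrite map_nth, seq_nth by lia. reflexivity. }
  exists (L, ((D w x, D x y), (D y z, D w z))). exists I.
  unfold tW, tZ, tA, tB, tel, tc1, tc2, tc3, tc4, tx, ty, GRs. cbn [fst snd].
  split; [unfold L; rewrite length_map, length_seq; reflexivity|].
  split; [|split; [|split; [|split; [|split; [|split]]]]].
  - intros i Hi. rewrite !Hn by (try apply cnext_le; lia). unfold f. cbn [fst snd].
    split; [apply HG; exact Hi|]. split; apply fin_eq; auto.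
    apply (Hfin (ws i, zs i)). apply HG; exact Hi.
  - transitivity (sum_f_R0 (fun i => D (ws (cnext I i)) (zs i)) I).
    + apply sum_eq. intros i Hi. rewrite Hn by exact Hi. reflexivity.
    + rewrite Heq. apply sum_eq. intros i Hi. rewrite Hn by exact Hi. reflexivity.
  - rewrite Hn by lia. unfold f. cbn [fst snd]. rewrite Hw. apply fin_eq. exact A1.
  - apply fin_eq. exact A2.
  - rewrite Hn by lia. unfold f. cbn [fst snd]. rewrite Hz. apply fin_eq. exact A3.
  - rewrite !Hn by lia. unfold f. cbn [fst snd]. rewrite Hw, Hz. apply fin_eq. exact Hf.
  - unfold D. lra.
Qed.

Lemma analytic_G : analytic dY (Grays dL Gam).
Proof.
  exists (list ((X*X)*(R*R)) * ((R*R)*(R*R)))%type, dZ. split; [apply PZ|].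
  exists Bset. split; [apply Bset_borel|].
  intros p. split; [apply Bset_complete|]. intros [z Hz]. apply (Bset_sound (p, z) Hz).
Qed.

Lemma analytic_R : analytic dY (Rrays dL Gam).
Proof.
  exists (list ((X*X)*(R*R)) * ((R*R)*(R*R)))%type, dZ. split; [apply PZ|].
  exists (fun t => Bset t \/ Bset ((snd (fst t), fst (fst t)), snd t)). split.
  - apply borel_union2; [apply Bset_borel|].
    apply (borel_preimage dT dT (fun t => ((snd (fst t), fst (fst t)), snd t)) Bset); [|apply Bset_borel].
    apply contf_pair; [apply contf_pair|apply contf_snd].
    + apply (contf_comp dT dY d fst snd); [apply contf_fst|apply contf_snd].
    + apply (contf_comp dT dY d fst fst); apply contf_fst.
  - intros p. unfold Rrays, Ginv. split.
    + intros [H|H].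
      * destruct (Bset_complete p H) as [z Hz]. exists z. left. exact Hz.
      * destruct (Bset_complete _ H) as [z Hz]. exists z. right. exact Hz.
    + intros [z [Hz|Hz]].
      * left. apply (Bset_sound (p, z) Hz).
      * right. apply (Bset_sound _ Hz).
Qed.

End Comb.

Theorem lemma3p3 (X : Type) (d : X -> X -> R) (dL : X -> X -> ER)
  (HX : polish d) (HdL : ext_distance dL)
  (HdLB : borel_fun (prod_metric d d) (fun p => dL (fst p) (snd p)))
  (Gam : X * X -> Prop)
  (Hfin : forall p, Gam p -> dL (fst p) (snd p) <> PInf)
  (Hsc : sigma_compact (prod_metric d d) Gam)
  (Hcm : cyc_mono dL Gam) :
  cyc_mono dL (Grays dL Gam) /\
  (forall p, Gamma' dL Gam p -> Grays dL Gam p) /\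
  (forall p, Grays dL Gam p -> dL (fst p) (snd p) <> PInf) /\
  analytic (prod_metric d d) (Grays dL Gam) /\
  analytic (prod_metric d d) (Rrays dL Gam).
Proof.
  split; [exact (g_cyc X dL HdL Gam Hfin Hcm)|].
  split; [exact (gp_in_g X dL HdL Gam)|].
  split; [exact (grays_fin X dL HdL Gam Hfin)|].
  destruct (classic (inhabited X)) as [[x0]|nX].
  - split.
    + exact (analytic_G X dL HdL Gam Hfin d HX HdLB Hsc ((x0, x0), (0, 0))).
    + exact (analytic_R X dL HdL Gam Hfin d HX HdLB Hsc ((x0, x0), (0, 0))).
  - split; exists R, dR; (split; [apply polish_R|]); exists (fun _ => False);
      (split; [apply borel_empty|]); intros [a b]; exfalso; apply nX; exact (inhabits a).
Qed.
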